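(* There exist finite connected simple graphs $H_1$ and $H_2$ having a common universal cover (equivalently, a common finite connected covering graph) such that their minimal common cover is not unique. That is, there exist at least two pairwise non-isomorphic connected graphs, each of which is a covering graph of both $H_1$ and $H_2$, and each of which has the minimum number of vertices among all connected common covering graphs of $H_1$ and $H_2$.
   Context: A graph $\tilde G$ is a covering graph of a graph $G$ if there is a surjective graph homomorphism $f\colon\tilde G\to G$ such that, for every vertex $v$ of $\tilde G$, $f$ maps the set of edges incident with $v$ bijectively onto the set of edges incident with $f(v)$. A common cover of $H_1$ and $H_2$ is a graph that is a covering graph of both. The universal cover of a connected graph is its (possibly infinite) universal covering tree. *)

(* Defs.v *)
From mathcomp Require Import all_boot.
Set Implicit Arguments. Unset Strict Implicit. Unset Printing Implicit Defensive.

Record sgraph := SGraph {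
  vert :> finType;
  adj : rel vert;
  adj_sym : symmetric adj;
  adj_irr : irreflexive adj }.

Definition connected (G : sgraph) : Prop :=
  0 < #|vert G| /\ forall x y : vert G, connect (@adj G) x y.

(* f : C -> G is a covering map: a surjective graph homomorphism which maps
   the edges at each vertex v bijectively onto the edges at f v.  For simple
   graphs, edges at v correspond to neighbours of v; given the homomorphism
   property, bijectivity means: every neighbour w of f v has exactly one
   preimage among the neighbours of v. *)
Definition is_covering_map (C G : sgraph) (f : vert C -> vert G) : Prop :=
  (forall y : vert G, exists x : vert C, f x = y) /\
  (forall x y : vert C, adj x y -> adj (f x) (f y)) /\
  (forall (v : vert C) (w : vert G), adj (f v) w ->
     exists! u : vert C, adj v u /\ f u = w).

Definition covers (C G : sgraph) : Prop :=
  exists f : vert C -> vert G, is_covering_map f.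

Definition isomorphic (C D : sgraph) : Prop :=
  exists g : vert C -> vert D, bijective g /\
    forall x y : vert C, adj (g x) (g y) = adj x y.

Definition conn_common_cover (C H1 H2 : sgraph) : Prop :=
  connected C /\ covers C H1 /\ covers C H2.

Definition minimal_common_cover (C H1 H2 : sgraph) : Prop :=
  conn_common_cover C H1 H2 /\
  forall D : sgraph, conn_common_cover D H1 H2 -> #|vert C| <= #|vert D|.

(* Main.v *)
Require Import Defs.
From mathcomp Require Import all_boot.
Set Implicit Arguments. Unset Strict Implicit. Unset Printing Implicit Defensive.


Definition fib (C G : sgraph) (f : vert C -> vert G) (a : vert G) : {set vert C} := [set v | f v == a].

Lemma fib_le (C G : sgraph) (f : vert C -> vert G) (fc : is_covering_map f) a b : adj a b -> #|fib f a| <= #|fib f b|.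
Proof.
move=> ab.
case: fc => _ [hom lift].
pose g v := odflt v [pick u | adj v u && (f u == b)].
have gP v : v \in fib f a -> adj v (g v) /\ f (g v) = b.
  rewrite inE => /eqP fv; rewrite /g; case: pickP => [u /andP[h1 /eqP h2]|none] //=.
  have := lift v b; rewrite fv => /(_ ab) [u [[h1 h2] _]].
  by move: (none u); rewrite h1 h2 eqxx.
have inj : {in fib f a &, injective g}.
  move=> v1 v2 h1 h2 e.
  have [a1 b1] := gP _ h1; have [a2 b2] := gP _ h2.
  move: h1 h2; rewrite !inE => /eqP f1 /eqP f2.
  have := lift (g v1) a; rewrite b1 adj_sym => /(_ ab) [w [_ uq]].
  rewrite -(uq v1); last by rewrite adj_sym f1.
  by rewrite (uq v2) // e adj_sym f2.
rewrite -(card_in_imset inj); apply: subset_leq_card.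
apply/subsetP => u /imsetP[v hv ->]; rewrite inE; have [_ ->] := gP _ hv; exact: eqxx.
Qed.

Lemma fib_eq (C G : sgraph) (f : vert C -> vert G) (fc : is_covering_map f) a b : connect (@adj G) a b -> #|fib f a| = #|fib f b|.
Proof.
move=> /connectP[p]; elim: p a => [|c p IH] a /= => [_ -> //|/andP[ac pc] lc].
rewrite -(IH c pc lc); apply/eqP; rewrite eqn_leq !(fib_le fc) //; by rewrite adj_sym.
Qed.

Lemma card_fib (C G : sgraph) (f : vert C -> vert G) : #|vert C| = \sum_(a : vert G) #|fib f a|.
Proof.
rewrite -sum1_card (partition_big f predT) //=.
apply: eq_bigr => a _; rewrite -sum1_card; apply: eq_bigl => v; by rewrite inE.
Qed.

Lemma cover_dvd (C G : sgraph) (f : vert C -> vert G) (fc : is_covering_map f) : connected G -> #|vert G| %| #|vert C|.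
Proof.
case=> _ cn; rewrite (card_fib f).
case: (pickP (fun _ : vert G => true)) => [a0 _|none].
  rewrite (eq_bigr (fun _ => #|fib f a0|)) ?sum_nat_const ?dvdn_mulr // => a _.
  exact: (fib_eq fc).
by rewrite big_pred0.
Qed.


Definition eadjn (E : seq (nat * nat)) (a b : nat) : bool :=
  (a != b) && (((a, b) \in E) || ((b, a) \in E)).

Definition eadj n (E : seq (nat * nat)) : rel 'I_n := fun x y => eadjn E x y.

Lemma eadjn_sym E : symmetric (eadjn E).
Proof. by move=> x y; rewrite /eadjn eq_sym orbC. Qed.
Lemma eadj_sym n E : symmetric (@eadj n E).
Proof. by move=> x y; rewrite /eadj eadjn_sym. Qed.
Lemma eadj_irr n E : irreflexive (@eadj n E).
Proof. by move=> x; rewrite /eadj /eadjn eqxx. Qed.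

Definition mkG n E : sgraph := SGraph (@eadj_sym n E) (@eadj_irr n E).

Definition coverb n m (E F : seq (nat * nat)) (f : nat -> nat) : bool :=
  let s := iota 0 n in
  let P v w u := eadjn E v u && (f u == w) in
  [&& all (fun y => has (fun x => f x == y) s) (iota 0 m),
      all (fun x => f x < m) s,
      all (fun x => all (fun y => eadjn E x y ==> eadjn F (f x) (f y)) s) s &
      all (fun v => all (fun w => eadjn F (f v) w ==>
          (has (P v w) s && all (fun u1 => all (fun u2 => P v w u1 ==> P v w u2 ==> (u1 == u2)) s) s))
        (iota 0 m)) s].

Definition lift n m (f : nat -> nat) (v : 'I_n) : 'I_m.+1 := inord (f v).

Lemma coverbP n m E F f : coverb n m.+1 E F f ->
  @is_covering_map (mkG n E) (mkG m.+1 F) (lift m f).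
Proof.
case/and4P=> /allP s /allP bd /allP h /allP l.
have fv (v : 'I_n) : (lift m f v : nat) = f v.
  by rewrite /lift inordK // bd // mem_iota leq0n add0n ltn_ord.
have mi k (x : 'I_k) : (x : nat) \in iota 0 k by rewrite mem_iota leq0n add0n ltn_ord.
split; [|split].
- move=> y; have /hasP[x hx /eqP fx] := s _ (mi _ y).
  move: hx; rewrite mem_iota add0n => /andP[_ hx].
  by exists (Ordinal hx); apply: val_inj; rewrite /= fv.
- move=> x y a; move: (h _ (mi _ x)) => /allP /(_ _ (mi _ y)) /implyP /(_ a).
  by rewrite /= /eadj !fv.
- move=> v w a; move: (l _ (mi _ v)) => /allP /(_ _ (mi _ w)) /implyP.
  rewrite /= /eadj fv in a; move/(_ a) => /andP[/hasP[u hu /andP[h1 /eqP h2]] /allP uq].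
  move: hu; rewrite mem_iota add0n => /andP[_ hu].
  exists (Ordinal hu); split.
    by split => //; apply: val_inj; rewrite /= fv.
  move=> u' [h3 h4]; apply: val_inj => /=.
  have hu2 : u \in iota 0 n by rewrite mem_iota add0n hu.
  move: (uq _ (mi _ u')) => /allP /(_ _ hu2) /implyP H.
  have H1 : eadjn E v u' && (f u' == w) by move: h3; rewrite /= /eadj => ->; rewrite -h4 fv eqxx.
  have H2 : eadjn E v u && (f u == w) by rewrite h1 h2 eqxx.
  by move/implyP: (H H1) => /(_ H2) /eqP.
Qed.

Definition step n E (S : seq nat) : seq nat :=
  S ++ [seq y <- iota 0 n | (y \notin S) && has (fun x => eadjn E x y) S].
Definition connb n E : bool :=
  (0 < n) && all (fun y => y \in iter n (step n E) [:: 0]) (iota 0 n).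

Lemma connbP n E : connb n E -> connected (mkG n E).
Proof.
case/andP=> n0 /allP al.
pose r : 'I_n := Ordinal n0.
have key k : forall y, y \in iter k (step n E) [:: 0] ->
    exists hy : y < n, connect (@adj (mkG n E)) r (Ordinal hy).
  elim: k => [|k IH] y /=.
    by rewrite inE => /eqP ->; exists n0; apply: connect0.
  rewrite /step mem_cat => /orP[/IH //|].
  rewrite mem_filter mem_iota add0n => /andP[/andP[_ /hasP[x hx exy]] /andP[_ hy]].
  have [hx' cx] := IH _ hx; exists hy.
  apply: connect_trans cx _; apply: connect1; exact: exy.
have cr (y : 'I_n) : connect (@adj (mkG n E)) r y.
  have yi : (y : nat) \in iota 0 n by rewrite mem_iota add0n ltn_ord.
  have [hy c] := key _ _ (al _ yi).
  by have -> : y = Ordinal hy by apply: val_inj.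
split; first by rewrite card_ord.
move=> x y; apply: connect_trans (cr y).
by rewrite (sym_connect_sym (@adj_sym (mkG n E))).
Qed.

Definition triangle (G : sgraph) : Prop :=
  exists x y z : vert G, [&& adj x y, adj y z & adj x z].

Lemma iso_tri C D : isomorphic C D -> triangle C -> triangle D.
Proof. by case=> g [_ hg] [x [y [z h]]]; exists (g x), (g y), (g z); rewrite !hg. Qed.

Definition trib n E : bool :=
  let s := iota 0 n in
  has (fun x => has (fun y => has (fun z => [&& eadjn E x y, eadjn E y z & eadjn E x z]) s) s) s.

Lemma tribP n E : trib n E -> triangle (mkG n E).
Proof.
case/hasP=> x hx /hasP[y hy /hasP[z hz h]].
move: hx hy hz; rewrite !mem_iota !add0n => /andP[_ hx] /andP[_ hy] /andP[_ hz].
by exists (Ordinal hx), (Ordinal hy), (Ordinal hz).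
Qed.

Lemma tribN n E : ~~ trib n E -> ~ triangle (mkG n E).
Proof.
move=> /negP nt [x [y [z h]]]; apply: nt.
have mi (u : 'I_n) : (u : nat) \in iota 0 n by rewrite mem_iota add0n ltn_ord.
by apply/hasP; exists (x : nat) => //; apply/hasP; exists (y : nat) => //; apply/hasP; exists (z : nat).
Qed.

Definition E1 := [:: (0, 1); (0, 3); (0, 5); (1, 2); (1, 5); (2, 3); (2, 4); (3, 4)].
Definition E2 := [:: (0, 3); (0, 4); (0, 8); (1, 4); (1, 5); (1, 6); (2, 3); (2, 5); (2, 7); (3, 8); (4, 6); (5, 7)].
Definition EC1 := [:: (0, 3); (0, 9); (0, 15); (1, 4); (1, 10); (1, 16); (2, 5); (2, 11); (2, 17); (3, 7); (3, 15); (4, 8); (4, 16); (5, 6); (5, 17); (6, 9); (6, 12); (7, 10); (7, 13); (8, 11); (8, 14); (9, 12); (10, 13); (11, 14)].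
Definition EC2 := [:: (0, 3); (0, 9); (0, 15); (1, 4); (1, 10); (1, 16); (2, 5); (2, 11); (2, 17); (3, 7); (3, 17); (4, 8); (4, 15); (5, 6); (5, 16); (6, 9); (6, 13); (7, 10); (7, 14); (8, 11); (8, 12); (9, 12); (10, 13); (11, 14)].
Definition H1 := mkG 6 E1.
Definition H2 := mkG 9 E2.
Definition C1 := mkG 18 EC1.
Definition C2 := mkG 18 EC2.

Definition p1 (v : nat) : nat := v %/ 3.
Definition q1 (v : nat) : nat := nth 0 [:: 0; 1; 2; 3; 4; 5; 1; 2; 0; 4; 5; 3; 6; 7; 8; 8; 6; 7] v.
Definition q2 (v : nat) : nat := nth 0 [:: 0; 2; 1; 4; 3; 5; 2; 1; 0; 3; 5; 4; 8; 7; 6; 8; 7; 6] v.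

Lemma cH1 : connected H1. Proof. apply: connbP; by vm_compute. Qed.
Lemma cH2 : connected H2. Proof. apply: connbP; by vm_compute. Qed.
Lemma cC1 : connected C1. Proof. apply: connbP; by vm_compute. Qed.
Lemma cC2 : connected C2. Proof. apply: connbP; by vm_compute. Qed.
Lemma f11 : covers C1 H1. Proof. exists (lift 5 p1); apply: coverbP; by vm_compute. Qed.
Lemma f21 : covers C2 H1. Proof. exists (lift 5 p1); apply: coverbP; by vm_compute. Qed.
Lemma f12 : covers C1 H2. Proof. exists (lift 8 q1); apply: coverbP; by vm_compute. Qed.
Lemma f22 : covers C2 H2. Proof. exists (lift 8 q2); apply: coverbP; by vm_compute. Qed.
Lemma tC1 : triangle C1. Proof. apply: tribP; by vm_compute. Qed.
Lemma tC2 : ~ triangle C2. Proof. apply: tribN; by vm_compute. Qed.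

Lemma lower D : conn_common_cover D H1 H2 -> 18 <= #|vert D|.
Proof.
case=> [[pos _] [[g1 hg1] [g2 hg2]]].
have d1 := cover_dvd hg1 cH1; have d2 := cover_dvd hg2 cH2.
rewrite /= card_ord in d1; rewrite /= card_ord in d2.
have : lcmn 6 9 %| #|vert D| by rewrite dvdn_lcm d1 d2.
by move/dvdn_leq; apply.
Qed.

Lemma minC1 : minimal_common_cover C1 H1 H2.
Proof.
split; first by split; [exact: cC1 | split; [exact: f11 | exact: f12]].
by move=> D /lower; rewrite /= card_ord.
Qed.
Lemma minC2 : minimal_common_cover C2 H1 H2.
Proof.
split; first by split; [exact: cC2 | split; [exact: f21 | exact: f22]].
by move=> D /lower; rewrite /= card_ord.
Qed.

Theorem mainTheorem6 :
  exists H1 H2 : sgraph,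
    connected H1 /\ connected H2 /\
    (exists C : sgraph, conn_common_cover C H1 H2) /\
    exists C1 C2 : sgraph,
      minimal_common_cover C1 H1 H2 /\ minimal_common_cover C2 H1 H2 /\
      ~ isomorphic C1 C2.
Proof.
exists H1, H2; split; first exact: cH1; split; first exact: cH2; split.
  by exists C1; case: minC1.
exists C1, C2; split; first exact: minC1; split; first exact: minC2.
by move=> iso; apply: tC2; apply: iso_tri iso tC1.
Qed.
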